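(* There is an absolute constant $c > 0$ such that for every integer $L \geq 2$, every $m$, and every $\lambda \in [m]^{L+1}$ with pairwise distinct entries, the following holds: if $\lambda = \tau^0, \tau^1, \ldots, \tau^N$ is any sequence of states such that for each $s \in [N]$, $\tau^s = (j_s - 1, j_s)\tau^{s-1}$ for some $j_s \in \{1,\ldots,L\}$, and $\tau^N_L = \lambda_0$, then there exists $s \in \{0,\ldots,N\}$ such that $|\{\ell \in \{0,\ldots,L\} : \tau^s_\ell \neq \lambda_\ell\}| \geq c\log L$.
   Context: States are vectors $\tau = (\tau_0, \ldots, \tau_L) \in [m]^{L+1}$ (coordinate $\ell$ is level $\ell$); $(a,b)\tau$ denotes $\tau$ with the entries at levels $a$ and $b$ exchanged. Thus the sequence transforms $\lambda$ into a state whose level-$L$ entry is the original level-0 entry, using only swaps of adjacent levels. *)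

(* Defs.v *)
From mathcomp Require Import all_boot.
From mathcomp Require Import fingroup perm.
From Stdlib Require Import Reals.

Set Implicit Arguments.
Unset Strict Implicit.
Unset Printing Implicit Defensive.

(* A state is tau : {ffun 'I_(L+1) -> 'I_m}; level l entry is tau l.
   (a,b)tau : the state with the entries at levels a and b exchanged. *)
Definition swap_lv (n m : nat) (a b : 'I_n) (t : {ffun 'I_n -> 'I_m})
  : {ffun 'I_n -> 'I_m} := [ffun l => t (tperm a b l)].

(* Main.v *)
Require Import Defs.
From mathcomp Require Import all_boot.
From mathcomp Require Import fingroup perm.
From Stdlib Require Import Reals.
From mathcomp Require Import zify.
From Stdlib Require Import Lra Psatz.

Set Implicit Arguments.
Unset Strict Implicit.
Unset Printing Implicit Defensive.

Section Gen.
Variables (n : nat) (T : finType).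
Implicit Types (t lam : {ffun 'I_n -> T}).

Definition step t t' : Prop :=
  t' = t \/ exists i j : 'I_n, nat_of_ord j = (nat_of_ord i).+1 /\ t' = [ffun l => t (tperm i j l)].

Lemma step_sym t t' : step t t' -> step t' t.
Proof.
case=> [->|[i [j [hij ->]]]]; first by left.
right; exists i, j; split => //; apply/ffunP => l; rewrite !ffunE tpermK //.
Qed.

Lemma step_inj t t' : step t t' -> injective t -> injective t'.
Proof.
case=> [->//|[i [j [hij ->]]]] hi x y; rewrite !ffunE => /hi; apply: perm_inj.
Qed.

Lemma step_move t t' l x : step t t' -> t l = x ->
  exists l', t' l' = x /\ l' <= l.+1 /\ l <= l'.+1.
Proof.
case=> [->|[i [j [hij ->]]]] hx; first by exists l; split => //; lia.
exists (tperm i j l); rewrite ffunE tpermK; split => //.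
case: tpermP => [->|->|]; lia.
Qed.

Definition valid (tau : nat -> {ffun 'I_n -> T}) := forall s, step (tau s) (tau s.+1).

Definition cnt (lam : {ffun 'I_n -> T}) t lo hi :=
  #|[set l : 'I_n | (lo <= l <= hi) && (t l != lam l)]|.

Lemma cnt0P lam t lo hi : cnt lam t lo hi = 0 ->
  forall l : 'I_n, lo <= l <= hi -> t l = lam l.
Proof.
move=> /eqP; rewrite cards_eq0 => /eqP h l hl.
apply/eqP; apply: contraT => hne.
have : l \in [set l : 'I_n | (lo <= l <= hi) && (t l != lam l)] by rewrite inE hl.
by rewrite h inE.
Qed.

Lemma cnt_pos lam t lo hi (l : 'I_n) : lo <= l <= hi -> t l <> lam l -> 0 < cnt lam t lo hi.
Proof.
move=> hl hne; apply/card_gt0P; exists l; rewrite inE hl /=; apply/eqP => //.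
Qed.

Lemma cnt_split lam t lo c hi : lo <= c.+1 -> c <= hi ->
  cnt lam t lo c + cnt lam t c.+1 hi <= cnt lam t lo hi.
Proof.
move=> h1 h2; rewrite /cnt -cardsUI.
set A := [set l : 'I_n | _ ]; set B := [set l : 'I_n | _ ].
have -> : A :&: B = set0.
  apply/setP => l; rewrite !inE; apply/negP => /andP [/andP [/andP [_ ?] _] /andP [/andP [? _] _]]; lia.
rewrite cards0 addn0; apply: subset_leq_card; apply/subsetP => l.
rewrite !inE => /orP [/andP [/andP [? ?] ->]|/andP [/andP [? ?] ->]]; rewrite andbT; apply/andP; split; lia.
Qed.

Lemma cnt_mirror lam t lo hi lo' hi' :
  (forall z : 'I_n, (lo <= z <= hi) = (lo' <= rev_ord z <= hi')) ->
  cnt [ffun z => lam (rev_ord z)] [ffun z => t (rev_ord z)] lo hi = cnt lam t lo' hi'.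
Proof.
move=> H; rewrite /cnt -[RHS](card_preimset _ (@rev_ord_inj n)).
apply: eq_card => z; rewrite !inE !ffunE H //.
Qed.

End Gen.

Section Seq.
Variables (n : nat) (T : finType).
Implicit Types (t lam : {ffun 'I_n -> T}) (tau : nat -> {ffun 'I_n -> T}).

Lemma valid_inj tau : valid tau -> injective (tau 0) -> forall s, injective (tau s).
Proof. by move=> hv h0; elim=> // s IH; exact: step_inj (hv s) IH. Qed.

Lemma mem_all tau (x : T) : valid tau -> forall s,
  (exists l, tau s l = x) <-> (exists l, tau 0 l = x).
Proof.
move=> hv; elim=> [|s IH]; first by [].
rewrite -IH; split=> [[l hl]|[l hl]].
- have [l' [hl' _]] := step_move (step_sym (hv s)) hl; by exists l'.
- have [l' [hl' _]] := step_move (hv s) hl; by exists l'.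
Qed.

Lemma mem_move tau (x : T) s s' l : valid tau -> tau s l = x -> exists l', tau s' l' = x.
Proof. move=> hv hl; apply/(mem_all _ hv); apply/(mem_all _ hv s); by exists l. Qed.

Lemma ivt tau (x : T) s0 s1 (l0 l1 : 'I_n) u : valid tau -> (forall s, injective (tau s)) ->
  s0 <= s1 -> tau s0 l0 = x -> l0 <= u -> tau s1 l1 = x -> u <= l1 ->
  exists s (l : 'I_n), [/\ s0 <= s <= s1, tau s l = x & nat_of_ord l = u].
Proof.
move=> hv hi hs; move: {2}(s1 - s0) (erefl (s1 - s0)) => d.
elim: d s0 l0 hs => [|d IH] s0 l0 hs hd h0 hu0 h1 hu1.
- have e : s1 = s0 by lia.
  subst s1; have el : l0 = l1 by apply: (hi s0); rewrite h0 h1.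
  subst l1; exists s0, l0; split => //; [lia | lia].
- case: (eqVneq (nat_of_ord l0) u) => [e|ne].
  + exists s0, l0; split => //; lia.
  + have [l' [hl' [b1 b2]]] := step_move (hv s0) h0.
    have [s [l [hs' hl he]]] := IH s0.+1 l' ltac:(lia) ltac:(lia) hl' ltac:(lia) h1 hu1.
    exists s, l; split => //; lia.
Qed.

Lemma rev_valid tau be : valid tau -> valid (fun i => tau (be - i)).
Proof.
move=> hv i /=; case: (ltnP i be) => h.
- have -> : be - i = (be - i.+1).+1 by lia.
  exact: step_sym (hv _).
- have -> : be - i = 0 by lia.
  have -> : be - i.+1 = 0 by lia.
  by left.
Qed.

Lemma mir_step t t' : step t t' ->
  step [ffun z => t (rev_ord z)] [ffun z => t' (rev_ord z)].
Proof.
case=> [->|[i [j [hij ->]]]]; first by left.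
right; exists (rev_ord j), (rev_ord i); split.
  have := ltn_ord j; rewrite /= ; lia.
apply/ffunP => z; rewrite !ffunE; congr (t _).
case: (tpermP (rev_ord j) (rev_ord i) z) => [->|->|h1 h2]; rewrite ?rev_ordK ?tpermL ?tpermR //.
rewrite tpermD //; apply/eqP => e; [apply: h2|apply: h1]; by rewrite e rev_ordK.
Qed.

Lemma mir_valid tau : valid tau -> valid (fun s => [ffun z => tau s (rev_ord z)]).
Proof. by move=> hv s; apply: mir_step. Qed.

End Seq.

Lemma first_true (P : pred nat) a b : a <= b -> P b ->
  exists t, [/\ a <= t <= b, P t & forall s, a <= s < t -> ~~ P s].
Proof.
move=> hab hb.
have ex : exists s, (a <= s) && P s by exists b; rewrite hab hb.
case: (ex_minnP ex) => t /andP [h1 h2] hmin.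
exists t; split => //.
- apply/andP; split => //; apply: hmin; by rewrite hab hb.
- move=> s /andP [hs1 hs2]; apply/negP => hP.
  have := hmin s; rewrite hs1 hP => /(_ isT); lia.
Qed.

Lemma last_true (P : pred nat) a b : a <= b -> P a ->
  exists t, [/\ a <= t <= b, P t & forall s, t < s <= b -> ~~ P s].
Proof.
move=> hab ha; elim: b hab => [|b IH] hab.
- exists a; split => //; lia.
- case: (boolP (P b.+1)) => hb.
  + exists b.+1; split => //; [lia|move=> s; lia].
  + case: (leqP a b) => h.
    * have [t [h1 h2 h3]] := IH h; exists t; split => //; first lia.
      move=> s hs; case: (eqVneq s b.+1) => [->//|ne]; apply: h3; lia.
    * have e : a = b.+1 by lia.
      by move: ha; rewrite e (negbTE hb).
Qed.

Definition Rk (k : nat) : Prop := forall (n : nat) (T : finType)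
  (lam : {ffun 'I_n -> T}) (tau : nat -> {ffun 'I_n -> T}),
  valid tau -> (forall s, injective (tau s)) ->
  forall (a b al be : nat) (x : T), a + expn 2 k <= b -> al <= be ->
  cnt lam (tau al) a.+1 b = 0 ->
  (exists l : 'I_n, tau al l = x /\ l <= a) ->
  (exists l : 'I_n, tau be l = x /\ b <= l) ->
  exists s, [/\ al <= s <= be, k.+1 <= cnt lam (tau s) a.+1 b
              & forall l : 'I_n, tau s l = x -> l <= b].

Definition Lk (k : nat) : Prop := forall (n : nat) (T : finType)
  (lam : {ffun 'I_n -> T}) (tau : nat -> {ffun 'I_n -> T}),
  valid tau -> (forall s, injective (tau s)) ->
  forall (a b al be : nat) (x : T), a + expn 2 k <= b -> al <= be ->
  cnt lam (tau al) a.+1 b = 0 ->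
  (exists l : 'I_n, tau al l = x /\ b < l) ->
  (exists l : 'I_n, tau be l = x /\ l <= a.+1) ->
  exists s, [/\ al <= s <= be, k.+1 <= cnt lam (tau s) a.+1 b
              & forall l : 'I_n, tau s l = x -> a < l].

Lemma ne_lam n (T : finType) (lam t : {ffun 'I_n -> T}) lo hi (p l : 'I_n) x :
  injective t -> cnt lam t lo hi = 0 -> t p = x -> lo <= l <= hi -> p <> l -> x <> lam l.
Proof.
move=> hinj hc hp hl hne e; apply: hne; apply: hinj; by rewrite hp e (cnt0P hc hl).
Qed.

Lemma R0 : Rk 0.
Proof.
move=> n T lam tau hv hi a b al be x hab hal hc [l0 [h0 hl0]] [l1 [h1 hl1]].
rewrite expn0 in hab.
have [s [l [hs hl he]]] := ivt hv hi hal h0 (ltac:(lia) : l0 <= b) h1 hl1.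
exists s; split => //.
- apply: (@cnt_pos _ _ lam (tau s) a.+1 b l); first lia.
  rewrite hl; apply: (ne_lam (hi al) hc h0); first lia.
  move=> e; subst l0; lia.
- move=> l' hl'; have e : l' = l by apply: (hi s); rewrite hl hl'.
  subst l'; lia.
Qed.

Lemma RL k : Rk k -> Lk k.
Proof.
move=> HR n T lam tau hv hi a b al be x hab hal hc [l0 [h0 hl0]] [l1 [h1 hl1]].
have hn : b.+2 <= n by have := ltn_ord l0; lia.
pose mt s := [ffun z => tau s (rev_ord z)].
pose ml := [ffun z => lam (rev_ord z)].
have hmv : valid mt := mir_valid hv.
have hmi : forall s, injective (mt s).
  by move=> s z1 z2; rewrite !ffunE => /hi /rev_ord_inj.
have cm : forall s, cnt ml (mt s) (n - b - 2).+1 (n - a - 2) = cnt lam (tau s) a.+1 b.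
  move=> s; apply: cnt_mirror => z; have := ltn_ord z; rewrite /= => hz.
  apply/idP/idP => /andP [? ?]; apply/andP; split; lia.
have hA : n - b - 2 + expn 2 k <= n - a - 2 by lia.
have hC : cnt ml (mt al) (n - b - 2).+1 (n - a - 2) = 0 by rewrite cm.
have e0 : exists l : 'I_n, mt al l = x /\ l <= n - b - 2.
  exists (rev_ord l0); rewrite ffunE rev_ordK; split => //=; lia.
have e1 : exists l : 'I_n, mt be l = x /\ n - a - 2 <= l.
  exists (rev_ord l1); rewrite ffunE rev_ordK; split => //=; lia.
have [s [hs hcnt hy]] := HR n T ml mt hmv hmi (n - b - 2) (n - a - 2) al be x hA hal hC e0 e1.
exists s; split => //; first by rewrite -cm.
move=> l hl; have := hy (rev_ord l); rewrite ffunE rev_ordK => /(_ hl) /=.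
have := ltn_ord l; lia.
Qed.

Lemma Rstep k : Rk k -> Rk k.+1.
Proof.
move=> IH.
have IHL : Lk k := RL IH.
move=> n T lam tau hv hi a b al be x hab hal hc [l0 [h0 hl0]] [l1 [h1 hl1]].
rewrite expnS in hab.
set c := a + expn 2 k.
have hac : a + expn 2 k <= c by [].
have hcb : c + expn 2 k <= b by rewrite /c; lia.
have xne : forall l : 'I_n, a < l <= b -> x <> lam l.
  move=> l hl; apply: (ne_lam (hi al) hc h0) => //; move=> e; subst l0; lia.
have [s0 [lb0 [hs0 hlb0 hb0]]] := ivt hv hi hal h0 (ltac:(lia) : l0 <= b) h1 hl1.
pose P s := [exists l : 'I_n, (nat_of_ord l == b) && (tau s l == x)].
have hPs0 : P s0 by apply/existsP; exists lb0; rewrite hb0 hlb0 !eqxx.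
have [s1 [hs1 Ps1 hmin]] := first_true (ltac:(lia) : al <= s0) hPs0.
move: Ps1 => /existsP [lb /andP [/eqP hlb /eqP hxb]].
have below_lt : forall s (l : 'I_n), al <= s < s1 -> tau s l = x -> l < b.
  move=> s l hs hl; rewrite ltnNge; apply/negP => hbl.
  have [s' [l' [hs' hl' he']]] := ivt hv hi (ltac:(lia) : al <= s) h0 (ltac:(lia) : l0 <= b) hl hbl.
  have := hmin s' (ltac:(lia)); move/negP; apply; apply/existsP; exists l'.
  by rewrite hl' he' !eqxx.
have below : forall s (l : 'I_n), al <= s <= s1 -> tau s l = x -> l <= b.
  move=> s l hs hl; case: (ltnP s s1) => h.
  - have := below_lt s l (ltac:(lia)) hl; lia.
  - have e : s = s1 by lia.
    subst s; have e : l = lb by apply: (hi s1); rewrite hl hxb.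
    subst l; lia.
have hcR0 : cnt lam (tau al) c.+1 b = 0.
  have := cnt_split lam (tau al) (ltac:(lia) : a.+1 <= c.+1) (ltac:(lia) : c <= b).
  rewrite hc; lia.
have hRs1 : 0 < cnt lam (tau s1) c.+1 b.
  apply: (@cnt_pos _ _ lam (tau s1) c.+1 b lb); first lia.
  rewrite hxb; apply: xne; lia.
pose Q s := cnt lam (tau s) c.+1 b == 0.
have hQal : Q al by apply/eqP.
have [t [ht Qt hlast]] := last_true (ltac:(lia) : al <= s1) hQal.
have Qt' : cnt lam (tau t) c.+1 b = 0 by apply/eqP.
have hts1 : t < s1.
  case: (ltnP t s1) => // h; have e : t = s1 by lia.
  by subst t; rewrite Qt' in hRs1.
have Rne : forall s, t < s <= s1 -> 0 < cnt lam (tau s) c.+1 b.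
  by move=> s hs; rewrite lt0n; apply: hlast.
have [lt hlt] := @mem_move _ _ tau x al t l0 hv h0.
have hltc : lt <= c.
  have := below_lt t lt (ltac:(lia)) hlt; case: (leqP lt c) => // h1' h2'; exfalso.
  apply: (xne lt); first lia.
  by rewrite -hlt (cnt0P Qt') //; lia.
have close : forall s, al <= s <= s1 ->
    k.+2 <= cnt lam (tau s) a.+1 c + cnt lam (tau s) c.+1 b ->
    exists s, [/\ al <= s <= be, k.+2 <= cnt lam (tau s) a.+1 b
              & forall l : 'I_n, tau s l = x -> l <= b].
  move=> s hs hk; exists s; split; first lia.
  - have := cnt_split lam (tau s) (ltac:(lia) : a.+1 <= c.+1) (ltac:(lia) : c <= b); lia.
  - by move=> l; apply: below.
have [ss [hss hcntR hxss]] := IH n T lam tau hv hi c b t s1 x hcb (ltnW hts1) Qt'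
   (ex_intro _ lt (conj hlt hltc)) (ex_intro _ lb (conj hxb (ltac:(lia) : b <= lb))).
have htss : t < ss.
  case: (ltnP t ss) => // h; have e : ss = t by lia.
  by subst ss; rewrite Qt' in hcntR.
have hss1 : ss <= s1 by lia.
case: (posnP (cnt lam (tau ss) a.+1 c)) => hL; last first.
  apply: (close ss); first lia.
  lia.
have [lx hlx] := @mem_move _ _ tau x al ss l0 hv h0.
have hlxb : lx <= b := below ss lx (ltac:(lia)) hlx.
have hlx' : (lx <= a) \/ (c < lx).
  case: (leqP lx a) => h; first by left.
  case: (leqP lx c) => h'; last by right.
  exfalso; apply: (xne lx); first lia.
  by rewrite -hlx (cnt0P hL) //; lia.
case: hlx' => hlxa.
  have [s' [hs' hcnt' _]] := IH n T lam tau hv hi a c ss s1 x hac hss1 hL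
    (ex_intro _ lx (conj hlx hlxa)) (ex_intro _ lb (conj hxb (ltac:(lia) : c <= lb))).
  apply: (close s'); first lia.
  have := Rne s' (ltac:(lia)); lia.
pose S := [set z : 'I_n | z <= c].
have card_eq : #|tau t @: S| = #|tau ss @: S| by rewrite !card_imset //; apply: hi.
have xin : x \in tau t @: S by apply/imsetP; exists lt; rewrite ?inE.
have xout : x \notin tau ss @: S.
  apply/imsetP => [[z]]; rewrite inE => hz e.
  have ez : lx = z by apply: (hi ss); rewrite hlx.
  subst z; lia.
have [y hy1 hy2] : exists2 y, y \in tau ss @: S & y \notin tau t @: S.
  case: (boolP (tau ss @: S \subset tau t @: S)) => hsub.
  - have E : tau ss @: S = tau t @: S by apply/eqP; rewrite eqEcard hsub card_eq leqnn.
    by rewrite E xin in xout.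
  - by move/subsetPn: hsub.
move: hy1 => /imsetP [p1]; rewrite inE => hp1 ey.
have [p2 hp2] := @mem_move _ _ tau y ss t p1 hv (esym ey).
have hp2c : c < p2.
  rewrite ltnNge; apply/negP => h; move/negP: hy2; apply.
  by apply/imsetP; exists p2; rewrite ?inE.
case: (leqP p1 a) => hp1a.
  have hr0 : cnt lam (tau (ss - 0)) a.+1 c = 0 by rewrite subn0.
  have er0 : exists l : 'I_n, tau (ss - 0) l = y /\ l <= a.
    by exists p1; rewrite subn0 ey.
  have er1 : exists l : 'I_n, tau (ss - (ss - t)) l = y /\ c <= l.
    by exists p2; rewrite subKn ?hp2; [split => //; lia | lia].
  have [i [hi' hcnt hy]] := IH n T lam (fun i => tau (ss - i)) (rev_valid ss hv)
    (fun s => hi _) a c 0 (ss - t) y hac (leq0n _) hr0 er0 er1.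
  simpl in hcnt, hy.
  have hne : ss - i != t.
    apply/eqP => e; have := hy p2; rewrite e => /(_ hp2); lia.
  apply: (close (ss - i)); first lia.
  have := Rne (ss - i) (ltac:(move/eqP: hne; lia)); lia.
have ylam : y = lam p1 by rewrite ey (cnt0P hL) //; lia.
have hp2b : b < p2.
  rewrite ltnNge; apply/negP => h.
  have e2 : tau t p2 = lam p2 by rewrite (cnt0P Qt') //; lia.
  have e12 : tau al p1 = tau al p2.
    rewrite (cnt0P hc (ltac:(lia) : a < p1 <= b)) (cnt0P hc (ltac:(lia) : a < p2 <= b)).
    by rewrite -ylam -e2 hp2.
  have := hi al _ _ e12 => e; subst p2; lia.
have [s' [hs' hcnt' hy']] := IHL n T lam tau hv hi c b t ss y hcb (ltnW htss) Qt'
  (ex_intro _ p2 (conj hp2 hp2b)) (ex_intro _ p1 (conj (esym ey) (ltac:(lia) : p1 <= c.+1))).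
have hL' : 0 < cnt lam (tau s') a.+1 c.
  apply: (@cnt_pos _ _ lam (tau s') a.+1 c p1); first lia.
  move=> e; have := hy' p1; rewrite e -ylam => /(_ erefl); lia.
apply: (close s'); first lia.
lia.
Qed.

Lemma Rall k : Rk k.
Proof. elim: k => [|k IH]; [exact: R0 | exact: Rstep]. Qed.

Lemma INR_expn2 j : INR (expn 2 j) = (2 ^ j)%R.
Proof.
elim: j => [|j IH]; first by rewrite expn0.
rewrite expnS mult_INR IH /=; lra.
Qed.

Lemma ln_bound (L k : nat) : 0 < L -> L < expn 2 k.+1 -> (ln (INR L) <= INR k.+1)%R.
Proof.
move=> h0 h1.
have l2 : (ln 2 < 1)%R.
  have e : (1 + 1 < exp 1)%R by apply: exp_ineq1; lra.
  rewrite -[X in (_ < X)%R](ln_exp 1); apply: ln_increasing; lra.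
have hL : (0 < INR L)%R by apply: lt_0_INR; apply/ltP.
have h2 : (INR L < INR (expn 2 k.+1))%R by apply: lt_INR; apply/ltP.
rewrite INR_expn2 in h2.
have := ln_increasing _ _ hL h2; rewrite ln_pow; last lra.
have : (0 <= INR k.+1)%R by apply: pos_INR.
nra.
Qed.

Theorem lemma9 :
  exists c : R, (0 < c)%R /\
  forall (L m : nat), 2 <= L ->
  forall lam : {ffun 'I_L.+1 -> 'I_m}, injective lam ->
  forall (N : nat) (tau : nat -> {ffun 'I_L.+1 -> 'I_m}),
    tau 0 = lam ->
    (forall s, 1 <= s <= N ->
       exists j : 'I_L.+1, 0 < j /\ tau s = swap_lv (inord j.-1) j (tau s.-1)) ->
    tau N ord_max = lam ord0 ->
    exists s, s <= N /\
      (c * ln (INR L) <= INR #|[set l | tau s l != lam l]|)%R.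
Proof.
exists 1%R; split; first lra.
move=> L m hL lam hinj N tau h0 hstep hfin.
pose te s := tau (minn s N).
have hv : valid te.
  move=> s; rewrite /te; case: (ltnP s N) => h.
  - have e1 : minn s.+1 N = s.+1 by lia.
    have e2 : minn s N = s by lia.
    rewrite e1 ?e2.
    have [j [hj e]] := hstep s.+1 (ltac:(lia)).
    right; exists (inord j.-1), j; split.
      rewrite inordK; have := ltn_ord j; lia.
    by rewrite e /swap_lv.
  - have e1 : minn s.+1 N = N by lia.
    have e2 : minn s N = N by lia.
    by rewrite e1 ?e2; left.
have hi : forall s, injective (te s).
  apply: valid_inj hv _; by rewrite /te min0n h0.
pose k := trunc_log 2 L.
have hk1 : expn 2 k <= L by apply: trunc_logP; lia.
have hk2 : L < expn 2 k.+1 by apply: trunc_log_ltn.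
have hcl : cnt lam (te 0) 1 L = 0.
  rewrite /te min0n h0; case: (posnP (cnt lam lam 1 L)) => // /card_gt0P [l].
  by rewrite inE eqxx andbF.
have e0 : exists l : 'I_L.+1, te 0 l = lam ord0 /\ l <= 0.
  by exists ord0; rewrite /te min0n h0.
have e1 : exists l : 'I_L.+1, te N l = lam ord0 /\ L <= l.
  by exists ord_max; rewrite /te minnn hfin.
have [s [hs hcnt _]] := @Rall k L.+1 _ lam te hv hi 0 L 0 N (lam ord0) (ltac:(lia) : 0 + expn 2 k <= L) (leq0n N) hcl e0 e1.
exists s; split; first lia.
have es : te s = tau s by rewrite /te; congr tau; lia.
rewrite es in hcnt.
have hle : k.+1 <= #|[set l | tau s l != lam l]|.
  apply: (leq_trans hcnt); apply: subset_leq_card; apply/subsetP => l.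
  by rewrite !inE => /andP [_ ->].
have := ln_bound (ltac:(lia) : 0 < L) hk2.
have : (INR k.+1 <= INR #|[set l | tau s l != lam l]|)%R by apply: le_INR; apply/leP.
lra.
Qed.
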